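(* Let $\alpha>-1$ and let $W(x,y)=\dfrac{x^{\alpha}y^{\alpha+1}e^{-x-y}}{x+y}$ on $(0,\infty)^2$. Let $\{p_k\}_{k\ge0}$, $\{q_k\}_{k\ge0}$ be the monic Cauchy–Laguerre biorthogonal polynomials, i.e. $\deg p_k=\deg q_k=k$, both monic, with $$\int_0^\infty\!\!\int_0^\infty p_k(x)q_l(y)W(x,y)\,dx\,dy=h_k\delta_{kl}.$$ Write $p_k(x)=\sum_{i=0}^k a_{k,i}x^i$ with $a_{k,k}=1$, and define for each $\beta\in\mathbb{N}$ the numbers $b_{\beta,i}$, $0\le i\le\beta$, recursively by $b_{\beta,0}=1$ and $b_{\beta,i}=-\sum_{j=0}^{i-1}b_{\beta,j}\,a_{\beta-j,\beta-i}$. Then for all integers $\beta\ge k\ge0$, $$\int_0^\infty\!\!\int_0^\infty x^{\beta}q_k(y)W(x,y)\,dx\,dy=b_{\beta,\beta-k}\,h_k.$$ *)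

(* Defs.v *)
From HB Require Import structures.
From mathcomp Require Import all_boot all_order all_algebra.
From mathcomp Require Import all_classical all_reals all_analysis.
Set Implicit Arguments. Unset Strict Implicit. Unset Printing Implicit Defensive.
Import Order.TTheory GRing.Theory Num.Theory.
Local Open Scope classical_set_scope.
Local Open Scope ring_scope.

Definition CLweight (R : realType) (alpha : R) (x y : R) : R :=
  x `^ alpha * y `^ (alpha + 1) * expR (- x - y) / (x + y).

Definition dint (R : realType) (f : R -> R -> R) : \bar R :=
  (\int[lebesgue_measure]_(x in `]0%R, +oo[%classic : set R)
     (\int[lebesgue_measure]_(y in `]0%R, +oo[%classic : set R) (f x y)%:E))%E.

Fixpoint bseq (R : ringType) (a : nat -> nat -> R) (beta i : nat) : seq R :=
  match i with
  | 0 => [:: 1]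
  | i'.+1 =>
      let s := bseq a beta i' in
      rcons s (- \sum_(j < i'.+1) s`_j * a (beta - j)%N (beta - i'.+1)%N)
  end.

Definition bcoef (R : ringType) (a : nat -> nat -> R) (beta i : nat) : R :=
  (bseq a beta i)`_i.

(* Main.v *)
Require Import Defs.
From HB Require Import structures.
From mathcomp Require Import all_boot all_order all_algebra.
From mathcomp Require Import all_classical all_reals all_analysis.
From mathcomp Require Import measurable_realfun exponential_distribution.
From mathcomp Require Import ring lra.
Import Order.TTheory GRing.Theory Num.Theory.
Local Open Scope ring_scope.
Section Bounds.
Local Open Scope classical_set_scope.
Variable R : realType.

Lemma powR_le1Dn (y a : R) (K : nat) : 0 < y -> 0 <= a -> a <= K%:R ->
  y `^ a <= 1 + y ^+ K.
Proof.
move=> y0 a0 aK.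
have [y1|y1] := leP y 1.
  apply: (le_trans (y := y `^ 0)).
    by apply: ger_powR => //; rewrite y0 y1.
  by rewrite powRr0 lerDl exprn_ge0 // ltW.
apply: (le_trans (y := y `^ K%:R)).
  by apply: ler_powR => //; rewrite ltW.
rewrite powR_mulrn; last exact: ltW.
by rewrite -subr_ge0 addrK.
Qed.

Lemma pow_expR_bound (y : R) (K : nat) : 0 <= y ->
  (1 + y ^+ K.+1) * expR (- y) <=
  (1 + 2 ^+ K.+1 * K.+1`!%:R) * expR (- 2^-1 * y).
Proof.
move=> y0.
have y20 : 0 <= y / 2 by rewrite divr_ge0.
have h1 := expR_ge1Dxn K y20.
have e1 : 1 <= expR (y / 2).
  by rewrite (le_trans _ (expR_ge1Dx _)) // lerDl.
have e2 : y ^+ K.+1 <= 2 ^+ K.+1 * K.+1`!%:R * expR (y / 2).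
  have : (y / 2) ^+ K.+1 / K.+1`!%:R <= expR (y / 2).
    by rewrite (le_trans _ h1) // lerDr.
  rewrite -(@ler_pM2l _ (2 ^+ K.+1 * K.+1`!%:R)); last first.
    by rewrite mulr_gt0 ?exprn_gt0 // ltr0n fact_gt0.
  apply: le_trans; rewrite le_eqVlt; apply/orP; left; apply/eqP.
  have hf : (K.+1`!%:R : R) != 0 by rewrite pnatr_eq0 -lt0n fact_gt0.
  rewrite expr_div_n; field.
  by rewrite hf expf_neq0.
have e3 : 1 + y ^+ K.+1 <= (1 + 2 ^+ K.+1 * K.+1`!%:R) * expR (y / 2).
  by rewrite mulrDl mul1r lerD.
have -> : expR (- 2^-1 * y) = expR (y / 2) * expR (- y).
  by rewrite -expRD; congr expR; rewrite mulNr mulrC; field.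
rewrite mulrA ler_pM2r ?expR_gt0 //.
Qed.


Lemma CL_bound (alpha : R) (Q : {poly R}) : -1 < alpha -> exists K : nat,
  forall x y, 0 < x -> 0 < y ->
  `|Q.[y] * CLweight alpha x y| <=
  (\sum_(i < size Q) `|Q`_i|) * (x `^ alpha / x) *
    (1 + 2 ^+ K.+1 * K.+1`!%:R) * expR (- 2^-1 * y).
Proof.
move=> a1.
have := truncnS_gt (alpha + 1); set N := (_).+1 => HN.
exists (size Q + N)%N => x y x0 y0.
have a10 : 0 <= alpha + 1 by rewrite -(opprK 1) subr_ge0 ltW.
set S := \sum_(i < size Q) `|Q`_i|.
have HQ : `|Q.[y]| * y `^ (alpha + 1) <= S * (1 + y ^+ (size Q + N).+1).
  rewrite horner_coef /S mulr_suml.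
  apply: (le_trans (y := (\sum_(i < size Q) `|Q`_i * y ^+ i|) * y `^ (alpha + 1))).
    by rewrite ler_wpM2r ?powR_ge0 // ler_norm_sum.
  rewrite mulr_suml; apply: ler_sum => i _.
  rewrite normrM normrX (ger0_norm (ltW y0)) -mulrA ler_wpM2l //.
  rewrite -powR_mulrn ?(ltW y0) // -powRD; last by apply/implyP => _; rewrite gt_eqF.
  apply: powR_le1Dn => //; first by rewrite addr_ge0.
  rewrite (le_trans (y := (size Q + N)%N%:R)) //; last by rewrite ler_nat.
  rewrite natrD lerD // ?ler_nat ?ltW //.
  by rewrite ltnW.
have HW : x `^ alpha * expR (- x - y) / (x + y) <= x `^ alpha / x * expR (- y).
  rewrite -!mulrA [X in _ <= _ * X]mulrC ler_wpM2l ?powR_ge0 //.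
  have xy0 : 0 < x + y by rewrite addr_gt0.
  apply: ler_pM.
  - exact: expR_ge0.
  - by rewrite invr_ge0 ltW.
  - rewrite expRD; apply: ler_piMl; first exact: expR_ge0.
    by rewrite expR_le1 oppr_le0 ltW.
  - by rewrite lef_pV2 ?posrE // lerDl ltW.
have E : `|Q.[y] * CLweight alpha x y| =
    (`|Q.[y]| * y `^ (alpha + 1)) * (x `^ alpha * expR (- x - y) / (x + y)).
  rewrite normrM [`|CLweight _ _ _|]ger0_norm; last first.
    by rewrite /CLweight divr_ge0 ?mulr_ge0 ?powR_ge0 ?expR_ge0 ?addr_ge0 ?ltW.
  by rewrite /CLweight; ring.
rewrite E.
apply: (le_trans (y := S * (1 + y ^+ (size Q + N).+1) * (x `^ alpha / x * expR (- y)))).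
  have x0' := ltW x0; have y0' := ltW y0.
  apply: ler_pM; [by rewrite mulr_ge0 ?powR_ge0 | | exact: HQ | exact: HW].
  by rewrite divr_ge0 ?mulr_ge0 ?powR_ge0 ?expR_ge0 ?addr_ge0.
have := @pow_expR_bound y (size Q + N)%N (ltW y0).
move=> H.
have S0 : 0 <= S by rewrite /S sumr_ge0.
have P0 : 0 <= S * (x `^ alpha / x).
  by apply: mulr_ge0 => //; apply: divr_ge0; [exact: powR_ge0 | exact: ltW].
rewrite -mulrA [X in _ <= X]mulrC.
have -> : (1 + y ^+ (size Q + N).+1) * (x `^ alpha / x * expR (- y)) =
   (x `^ alpha / x) * ((1 + y ^+ (size Q + N).+1) * expR (- y)) by ring.
have -> : expR (- 2^-1 * y) * (S * (x `^ alpha / x) * (1 + 2 ^+ (size Q + N).+1 * (size Q + N).+1`!%:R)) = S * (x `^ alpha / x) * ((1 + 2 ^+ (size Q + N).+1 * (size Q + N).+1`!%:R) * expR (- 2^-1 * y)) by ring.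
rewrite mulrA ler_wpM2l //.
Qed.

Definition gg (alpha : R) (Q : {poly R}) (z : R * R) : R := Q.[z.2] * (z.1 `^ alpha * z.2 `^ (alpha + 1)
   * expR (- z.1 - z.2) * (z.1 + z.2) `^ (-1)).

Lemma gg_eq (alpha : R) (Q : {poly R}) x y : 0 < x -> 0 < y -> Q.[y] * CLweight alpha x y = gg alpha Q (x, y).
Proof.
by move=> x0 y0; rewrite /CLweight /gg /= powR_inv1 // addr_ge0 // ltW.
Qed.

Lemma measurable_horner (P : {poly R}) : measurable_fun setT (horner P).
Proof. exact: measurable_realfun.continuous_measurable_fun (@continuous_horner _ P). Qed.

Lemma measurable_gg (alpha : R) (Q : {poly R}) : measurable_fun setT (gg alpha Q).
Proof.
apply: measurable_realfun.measurable_funM.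
  exact: measurableT_comp (measurable_horner Q) measurable_snd.
apply: measurable_realfun.measurable_funM; last first.
  apply: measurableT_comp (measurable_powR _) _.
  exact: measurable_funD measurable_fst measurable_snd.
apply: measurable_realfun.measurable_funM; last first.
  apply: (@measurableT_comp _ _ _ _ _ _ (@expR R)); first exact: measurable_expR.
  apply: measurable_funB measurable_snd.
  exact: measurable_funN measurable_fst.
apply: measurable_realfun.measurable_funM.
  exact: measurableT_comp (measurable_powR _) measurable_fst.
exact: measurableT_comp (measurable_powR _) measurable_snd.
Qed.


Lemma CL_integrable (alpha : R) (Q : {poly R}) : -1 < alpha -> forall x, 0 < x ->
  lebesgue_measure.-integrable (`]0, +oo[%classic : set R)
    (fun y => (Q.[y] * CLweight alpha x y)%:E).
Proof.
move=> a1 x x0; have [K HK] := @CL_bound alpha Q a1.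
set C := (\sum_(i < size Q) `|Q`_i|) * (x `^ alpha / x) *
    (1 + 2 ^+ K.+1 * K.+1`!%:R).
have mD : measurable (`]0, +oo[%classic : set R) by exact: measurable_itv.
apply: (@le_integrable _ _ _ lebesgue_measure _ mD (fun y => (Q.[y] * CLweight alpha x y)%:E) (fun y => ((C * 2)%:E * (EFin \o exponential_pdf 2^-1) y)%E)).
- apply/(measurable_EFinP _ (fun y => Q.[y] * CLweight alpha x y)).
  apply: (eq_measurable_fun (fun y => gg alpha Q (x, y))).
    move=> y; rewrite inE /= in_itv /= andbT => y0.
    by rewrite gg_eq.
  apply: measurable_funTS.
  exact: measurable_fun_pair2 (measurable_gg alpha Q).
- move=> y; rewrite /= in_itv /= andbT => y0.
  rewrite /exponential_pdf patchE ifT; last by rewrite inE /= in_itv /= ltW.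
  rewrite lee_fin; apply: (le_trans (HK x y x0 y0)); rewrite -/C.
  have -> : C * 2 * (2^-1 * expR (- 2^-1 * y)) = C * expR (- 2^-1 * y) by field.
  have C0 : 0 <= C.
    apply: mulr_ge0; [apply: mulr_ge0; [apply: sumr_ge0 => i _; exact: normr_ge0
      | apply: divr_ge0; [exact: powR_ge0 | exact: ltW]]
      | apply: addr_ge0 => //; apply: mulr_ge0 => //; exact: exprn_ge0].
  by rewrite ger0_norm // mulr_ge0 // expR_ge0.
- apply: integrableZl => //.
  by apply: integrableS (integrable_exponential_pdf _) => //.
Qed.

Lemma CL_inner_measurable (alpha : R) (Q : {poly R}) :
  measurable_fun (`]0, +oo[%classic : set R)
    (fun x => (\int[lebesgue_measure]_(y in (`]0%R, +oo[%classic : set R))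
                (Q.[y] * CLweight alpha x y)%:E)%E).
Proof.
set D := (`]0, +oo[%classic : set R).
have mD : measurable D by exact: measurable_itv.
pose f0 := fun z : R * R => (gg alpha Q z)%:E.
have mf0 : measurable_fun setT f0.
  by apply/measurable_EFinP; exact: measurable_gg.
have mE : measurable (setT `*` D : set (R * R)) by apply: measurableX.
pose fp := (f0^\+)%E \_ (setT `*` D).
pose fn := (f0^\-)%E \_ (setT `*` D).
have mfp : measurable_fun setT fp.
  apply/(measurable_restrictT (f0^\+)%E mE); apply: measurable_funTS.
  exact: measurable_funepos.
have mfn : measurable_fun setT fn.
  apply/(measurable_restrictT (f0^\-)%E mE); apply: measurable_funTS.
  exact: measurable_funeneg.
have fp0 : forall z, (0 <= fp z)%E.
  by apply: erestrict_ge0 => z _; exact: funepos_ge0.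
have fn0 : forall z, (0 <= fn z)%E.
  by apply: erestrict_ge0 => z _; exact: funeneg_ge0.
have mFp := measurable_fun_fubini_tonelli_F (m2 := lebesgue_measure) fp mfp fp0.
have mFn := measurable_fun_fubini_tonelli_F (m2 := lebesgue_measure) fn mfn fn0.
apply: (eq_measurable_fun (fubini_F lebesgue_measure fp \- fubini_F lebesgue_measure fn)%E).
  move=> x; rewrite inE /D /= in_itv /= andbT => x0.
  rewrite /fubini_F /=.
  symmetry.
  transitivity (\int[lebesgue_measure]_(y in D) f0 (x, y))%E.
    apply: eq_integral => y; rewrite inE /= in_itv /= andbT => y0.
    by rewrite /f0 (gg_eq alpha Q x y x0 y0).
  rewrite integralE.
  congr (_ - _)%E; rewrite integral_mkcond; apply: eq_integral => y _.
    rewrite /fp !patchE; congr (if _ then _ else _); last by rewrite ?funeposE ?funenegE.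
    by apply/idP/idP => /set_mem H; apply/mem_set; [split | case: H].
  rewrite /fn !patchE; congr (if _ then _ else _); last by rewrite ?funeposE ?funenegE.
  by apply/idP/idP => /set_mem H; apply/mem_set; [split | case: H].
apply: measurable_funTS.
exact: emeasurable_funB.
Qed.

End Bounds.
Lemma size_bseq (R : ringType) (a : nat -> nat -> R) beta i :
  size (Defs.bseq a beta i) = i.+1.
Proof. by elim: i => [|i IH] //=; rewrite size_rcons IH. Qed.

Lemma nth_bseq (R : ringType) (a : nat -> nat -> R) beta i j :
  (j <= i)%N -> (Defs.bseq a beta i)`_j = bcoef a beta j.
Proof.
elim: i => [|i IH]; first by rewrite leqn0 => /eqP ->.
rewrite leq_eqVlt => /orP[/eqP ->//|]; rewrite ltnS => ji.
by rewrite /= nth_rcons size_bseq ltnS ji IH.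
Qed.

Lemma bcoefS (R : ringType) (a : nat -> nat -> R) beta i :
  bcoef a beta i.+1 =
  - \sum_(j < i.+1) bcoef a beta j * a (beta - j)%N (beta - i.+1)%N.
Proof.
rewrite /bcoef /Defs.bseq -/(Defs.bseq) /= nth_rcons size_bseq ltnn eqxx; congr (- _).
by apply: eq_bigr => j _; rewrite nth_bseq // -ltnS.
Qed.

Lemma bcoef0 (R : ringType) (a : nat -> nat -> R) beta : bcoef a beta 0 = 1.
Proof. by []. Qed.

Lemma Xn_expand (R : comRingType) (p : nat -> {poly R}) beta :
  (forall k, p k \is monic /\ size (p k) = k.+1) ->
  'X^beta = \sum_(j < beta.+1) bcoef (fun m i => (p m)`_i) beta j *: p (beta - j)%N.
Proof.
move=> Hp; set a := (fun m i => (p m)`_i).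
pose r i := 'X^beta - \sum_(j < i) bcoef a beta j *: p (beta - j)%N.
suff H : forall i, (i <= beta.+1)%N -> (size (r i) <= beta.+1 - i)%N.
  have := H beta.+1 (leqnn _); rewrite subnn leqn0 size_poly_eq0 /r subr_eq0.
  by move/eqP.
elim => [_|i IH Hi].
  by rewrite /r big_ord0 subr0 size_polyXn.
have Hib : (i <= beta)%N by [].
have IH' := IH (ltnW Hi).
have Hpi : size (p (beta - i)%N) = (beta - i).+1 by case: (Hp (beta - i)%N).
have Hmi : p (beta - i)%N \is monic by case: (Hp (beta - i)%N).
have Er : r i.+1 = r i - bcoef a beta i *: p (beta - i)%N.
  by rewrite /r big_ord_recr /= opprD addrA.
rewrite Er subSS; apply/leq_sizeP => n Hn.
rewrite coefB coefZ.
move: Hn; rewrite leq_eqVlt => /orP[/eqP <-|Hn].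
  have -> : (p (beta - i)%N)`_(beta - i) = 1.
    by move: Hmi; rewrite monicE /lead_coef Hpi /= => /eqP.
  rewrite mulr1 /r coefB coefXn coef_sum.
  case: i {IH IH' Hi Hpi Hmi Er} Hib => [|i] Hib.
    by rewrite subn0 eqxx big_ord0 subr0 bcoef0 subrr.
  rewrite bcoefS (_ : ((beta - i.+1)%N == beta) = false); last first.
    by apply: ltn_eqF; rewrite ltn_subrL /= (leq_trans _ Hib).
  rewrite sub0r; under eq_bigr do rewrite coefZ.
  by rewrite subrr.
have H1 : (r i)`_n = 0.
  by rewrite nth_default // (leq_trans IH') // subSn.
have H2 : (p (beta - i)%N)`_n = 0.
  by rewrite nth_default // Hpi.
by rewrite H1 H2 mulr0 subr0.
Qed.

Lemma fin_integrable d (T : measurableType d) (R : realType)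
  (mu : {measure set T -> \bar R}) (D : set T) (f : T -> \bar R) :
  measurable D -> measurable_fun D f ->
  (\int[mu]_(x in D) f x)%E \is a fin_num -> mu.-integrable D f.
Proof.
move=> mD mf fin; apply/integrableP; split => //.
have -> : (fun x => `|f x|%E) = (f^\+ \+ f^\-)%E by rewrite -fune_abse.
rewrite ge0_integralD //; last 2 first.
- exact: measurable_funepos.
- exact: measurable_funeneg.
move: fin; rewrite integralE fin_numB => /andP[h1 h2].
apply: lte_add_pinfty; rewrite -ge0_fin_numE //; apply: integral_ge0 => x _.
  exact: funepos_ge0.
exact: funeneg_ge0.
Qed.

Lemma Xn_eval (R : realType) (p : nat -> {poly R}) beta (x : R) :
  (forall k, p k \is monic /\ size (p k) = k.+1) ->
  x ^+ beta = \sum_(j < beta.+1) bcoef (fun m i => (p m)`_i) beta j * (p (beta - j)%N).[x].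
Proof.
move=> Hp; have := congr1 (horner^~ x) (@Xn_expand _ p beta Hp).
rewrite /= hornerXn horner_sum => ->.
by apply: eq_bigr => j _; rewrite hornerZ.
Qed.

Theorem proposition2 (R : realType) (alpha : R) (p q : nat -> {poly R})
    (h : nat -> R) :
  -1 < alpha ->
  (forall k, p k \is monic /\ size (p k) = k.+1) ->
  (forall k, q k \is monic /\ size (q k) = k.+1) ->
  (forall k l, dint (fun x y => (p k).[x] * (q l).[y] * CLweight alpha x y)
               = ((h k) * (k == l)%:R)%:E) ->
  forall beta k : nat, (k <= beta)%N ->
    dint (fun x y => x ^+ beta * (q k).[y] * CLweight alpha x y)
    = (bcoef (fun m i => (p m)`_i) beta (beta - k) * h k)%:E.
Proof.
move=> a1 Hp Hq Horth beta k kb.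
set D := (`]0%R, +oo[%classic : set R).
have mD : measurable D by exact: measurable_itv.
set G := fun x => (\int[lebesgue_measure]_(y in D) ((q k).[y] * CLweight alpha x y)%:E)%E.
pose Gr := fun x => fine (G x).
have GE : forall x, 0 < x -> G x = (Gr x)%:E.
  move=> x x0; rewrite /Gr fineK //.
  have := integrable_fin_num _ (@CL_integrable R alpha (q k) a1 x x0); apply.
  exact: measurable_itv.
have inner : forall (c : R -> R) x, 0 < x ->
    (\int[lebesgue_measure]_(y in D) (c x * (q k).[y] * CLweight alpha x y)%:E)%E
    = (c x * Gr x)%:E.
  move=> c x x0.
  under eq_integral => y _ do rewrite -mulrA EFinM.
  rewrite integralZl //; last exact: (@CL_integrable R alpha (q k) a1 x x0).
  by rewrite -/(G x) GE.
have dintE : forall c : R -> R,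
    dint (fun x y => c x * (q k).[y] * CLweight alpha x y)
    = (\int[lebesgue_measure]_(x in D) (c x * Gr x)%:E)%E.
  move=> c; rewrite /dint; apply: eq_integral => x.
  rewrite inE /= in_itv /= andbT => x0; exact: inner.
have mGr : measurable_fun D Gr.
  apply/(measurable_EFinP D Gr).
  apply: (eq_measurable_fun G); last exact: CL_inner_measurable.
  by move=> x; rewrite inE /D /= in_itv /= andbT => x0; rewrite GE.
have mP : forall P : {poly R}, measurable_fun D (fun x => (P.[x] * Gr x)%:E).
  move=> P; apply/(measurable_EFinP D (fun x => P.[x] * Gr x)).
  apply: measurable_realfun.measurable_funM => //.
  by apply: measurable_funTS; exact: measurable_horner.
have Hint : forall m, lebesgue_measure.-integrable D (fun x => ((p m).[x] * Gr x)%:E).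
  move=> m; apply: fin_integrable => //; first exact: mP.
  have E := dintE (fun x => (p m).[x]); rewrite /= in E.
  have F : dint (fun x y => (p m).[x] * (q k).[y] * CLweight alpha x y) \is a fin_num by rewrite Horth.
  rewrite E in F.
  exact: F.
have E := dintE (fun x => x ^+ beta); rewrite /= in E; rewrite E.
set a := (fun m i => (p m)`_i).
transitivity (\int[lebesgue_measure]_(x in D)
   (\sum_(j < beta.+1) (bcoef a beta j)%:E * ((p (beta - j)%N).[x] * Gr x)%:E))%E.
  apply: eq_integral => x _.
  rewrite (@Xn_eval R p beta x Hp) mulr_suml -sumEFin.
  by apply: eq_bigr => j _; rewrite -EFinM mulrA.
rewrite integral_sum; [ | exact: mD | by move=> j; apply: integrableZl => //; exact: Hint].
transitivity (\sum_(j < beta.+1)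
   (bcoef a beta j * (h (beta - j)%N * ((beta - j)%N == k)%:R))%:E)%E.
  apply: eq_bigr => j _; rewrite integralZl; [ | exact: mD | exact: Hint].
  rewrite EFinM; congr (_ * _)%E.
  have F := dintE (fun x => (p (beta - j)%N).[x]); rewrite /= Horth in F.
  exact: (esym F).
rewrite sumEFin; congr EFin.
have jlt : (beta - k < beta.+1)%N by rewrite ltnS leq_subr.
rewrite (bigD1 (Ordinal jlt)) //= subKn // eqxx mulr1 big1 ?addr0 //.
move=> j hj; case: eqP => [Ej|_]; last by rewrite mulr0 mulr0.
exfalso; move/eqP: hj; apply; apply: val_inj => /=.
by rewrite -Ej subKn // -ltnS.
Qed.
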